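(* Let $\alpha\in(0,1]$, let $I\subseteq\mathbb R$ be an interval with $0$ in its interior, and let $\gamma:I\to\mathbb H$ be continuous with, for some $\varrho>0$, $$[\gamma_0^{-1}\gamma_t]^{\mathsf h}\le\varrho|t|^{\frac{1+\alpha}2}\quad\text{and}\quad|(\gamma_0^{-1}\gamma_t)^{\mathsf v}-t|\le\varrho^2|t|^{1+\alpha}\qquad\text{for all }t\in I.$$ Then there exists $\delta_2>0$ with $[-\delta_2,\delta_2]\subseteq I$ such that for every $\delta\in(0,\delta_2]$ there is $\varepsilon_2=\varepsilon_2(\delta)>0$ with the property: for every $x\in B(\gamma_0,\varepsilon_2)$ there exists $t=t(x)\in[-\delta,\delta]$ with $[\gamma_t^{-1}x]^{\mathsf v}\le[\gamma_t^{-1}x]^{\mathsf h}$.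
   Context: The Heisenberg group $\mathbb H$ is $\mathbb R^3$ with product $(x^1,x^2,x^3)(y^1,y^2,y^3)=(x^1+y^1,x^2+y^2,x^3+y^3+x^1y^2-x^2y^1)$, inverse $x^{-1}=-x$. For $x\in\mathbb H$: $x^{\mathsf h}=(x^1,x^2)$, $x^{\mathsf v}=x^3$, $[x]^{\mathsf h}=|x^{\mathsf h}|$, $[x]^{\mathsf v}=\sqrt{|x^3|}$. $\mathsf d$ is a fixed distance on $\mathbb H$, left-invariant and $1$-homogeneous w.r.t. dilations $\delta_r(x)=(rx^1,rx^2,r^2x^3)$; $B(x,r)$ is the open $\mathsf d$-ball. *)

(* Defs.v *)
From Stdlib Require Import Reals Lra.
Open Scope R_scope.

Definition H : Type := ((R * R) * R)%type.

Definition h1 (x : H) : R := fst (fst x).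
Definition h2 (x : H) : R := snd (fst x).
Definition h3 (x : H) : R := snd x.

Definition hmul (x y : H) : H :=
  ((h1 x + h1 y, h2 x + h2 y),
   h3 x + h3 y + h1 x * h2 y - h2 x * h1 y).

Definition hinv (x : H) : H := ((- h1 x, - h2 x), - h3 x).

Definition dil (r : R) (x : H) : H := ((r * h1 x, r * h2 x), r * r * h3 x).

Definition hnorm (x : H) : R := sqrt (h1 x * h1 x + h2 x * h2 x).
Definition vnorm (x : H) : R := sqrt (Rabs (h3 x)).

Definition is_hom_distance (d : H -> H -> R) : Prop :=
  (forall x y, 0 <= d x y) /\
  (forall x y, d x y = 0 <-> x = y) /\
  (forall x y, d x y = d y x) /\
  (forall x y z, d x z <= d x y + d y z) /\
  (forall p x y, d (hmul p x) (hmul p y) = d x y) /\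
  (forall r x y, 0 < r -> d (dil r x) (dil r y) = r * d x y).

(* Real power s^a for s >= 0, with the convention 0^a = 0 (a > 0). *)
Definition rpow (s a : R) : R := if Rle_dec s 0 then 0 else Rpower s a.

Definition is_interval (I : R -> Prop) : Prop :=
  forall a b t, I a -> I b -> a <= t <= b -> I t.

Definition continuous_on (I : R -> Prop) (g : R -> H) : Prop :=
  forall t, I t -> forall eps, 0 < eps -> exists del, 0 < del /\
    forall s, I s -> Rabs (s - t) < del ->
      Rabs (h1 (g s) - h1 (g t)) < eps /\
      Rabs (h2 (g s) - h2 (g t)) < eps /\
      Rabs (h3 (g s) - h3 (g t)) < eps.

(* Main.v *)
Require Import Defs.
From Stdlib Require Import Reals Lra Lia ZArith Ranalysis5.
Open Scope R_scope.

Definition e0 : H := ((0,0),0).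

Lemma H_ext a b : h1 a = h1 b -> h2 a = h2 b -> h3 a = h3 b -> a = b.
Proof. destruct a as [[a1 a2] a3], b as [[b1 b2] b3]; unfold h1,h2,h3; simpl; intros; subst; reflexivity. Qed.

Ltac hx := apply H_ext; unfold hmul, hinv, dil, e0, h1, h2, h3; simpl.




Definition Nn (d : H -> H -> R) z := d e0 z.

Lemma N_ge0 d (Hd : is_hom_distance d) z : 0 <= Nn d z.
Proof. destruct Hd as [A _]; apply A. Qed.

Lemma N_e d (Hd : is_hom_distance d) : Nn d e0 = 0.
Proof. destruct Hd as [_ [B _]]; apply B; reflexivity. Qed.

Lemma N_inv d (Hd : is_hom_distance d) z : Nn d (hinv z) = Nn d z.
Proof.
  destruct Hd as [A [B [C [D [E F]]]]]. unfold Nn.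
  rewrite <- (E z e0 (hinv z)).
  replace (hmul z e0) with z by (hx; ring).
  replace (hmul z (hinv z)) with e0 by (hx; ring).
  apply C.
Qed.

Lemma N_mul d (Hd : is_hom_distance d) a b : Nn d (hmul a b) <= Nn d a + Nn d b.
Proof.
  destruct Hd as [A [B [C [D [E F]]]]]. unfold Nn.
  eapply Rle_trans. apply (D _ a).
  rewrite <- (E a e0 b). replace (hmul a e0) with a by (hx; ring). lra.
Qed.

Lemma N_dil d (Hd : is_hom_distance d) r z : 0 < r -> Nn d (dil r z) = r * Nn d z.
Proof.
  destruct Hd as [A [B [C [D [E F]]]]]. unfold Nn. intro Hr.
  rewrite <- (F r e0 z Hr). f_equal. hx; ring.
Qed.

Definition e3 : H := ((0,0),1).

Lemma v_pos d (Hd : is_hom_distance d) : 0 < Nn d e3.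
Proof.
  destruct (N_ge0 d Hd e3) as [h|h]; auto.
  destruct Hd as [A [B _]]. symmetry in h. apply B in h.
  unfold e0, e3 in h. injection h. lra.
Qed.

Lemma N_vert d (Hd : is_hom_distance d) s : Nn d ((0,0),s) = sqrt (Rabs s) * Nn d e3.
Proof.
  destruct (Rtotal_order s 0) as [Hs|[Hs|Hs]].
  - replace ((0,0),s) with (hinv (dil (sqrt (-s)) e3)).
    + rewrite N_inv, N_dil; auto. rewrite Rabs_left; auto. apply sqrt_lt_R0; lra.
    + hx; try ring. rewrite Rmult_1_r, sqrt_sqrt; lra.
  - subst. rewrite Rabs_R0, sqrt_0. replace ((0,0),0) with e0 by reflexivity.
    rewrite N_e; auto; ring.
  - replace ((0,0),s) with (dil (sqrt s) e3).
    + rewrite N_dil; auto. rewrite Rabs_right; auto; lra. apply sqrt_lt_R0; lra.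
    + hx; try ring. rewrite Rmult_1_r, sqrt_sqrt; lra.
Qed.


Definition pw (n : nat) (y : H) : H := ((INR n * h1 y, INR n * h2 y), INR n * h3 y).

Lemma N_pw d (Hd : is_hom_distance d) n y : Nn d (pw n y) <= INR n * Nn d y.
Proof.
  induction n.
  - replace (pw 0 y) with e0 by (hx; simpl; ring). rewrite N_e; auto. simpl; lra.
  - replace (pw (S n) y) with (hmul (pw n y) y) by (unfold pw; rewrite S_INR; hx; ring).
    eapply Rle_trans. apply N_mul; auto. rewrite S_INR; lra.
Qed.

Lemma N_proj d (Hd : is_hom_distance d) y : Nn d ((h1 y, h2 y), 0) <= Nn d y.
Proof.
  set (v := Nn d e3). assert (hv : 0 < v) by apply v_pos, Hd.
  assert (key : forall n, (0 < n)%nat ->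
     Nn d ((h1 y, h2 y), 0) <= Nn d y + sqrt (Rabs (h3 y) / INR n) * v).
  { intros n hn. assert (hn' : 0 < INR n) by (apply lt_0_INR; auto).
    set (q := ((h1 y, h2 y), h3 y / INR n) : H).
    assert (hq : Nn d q <= Nn d y).
    { pose proof (N_pw d Hd n y) as P. replace (pw n y) with (dil (INR n) q) in P
        by (unfold q, pw; hx; field; lra).
      rewrite N_dil in P; auto. apply Rmult_le_reg_l with (INR n); auto. }
    replace ((h1 y, h2 y), 0) with (hmul q ((0,0), - (h3 y / INR n))) by (unfold q, pw; hx; field; lra).
    eapply Rle_trans. apply N_mul; auto. rewrite N_vert; auto. fold v.
    unfold Rdiv; rewrite Rabs_Ropp, Rabs_mult, Rabs_inv, (Rabs_right (INR n)); lra. }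
  destruct (Rle_lt_dec (Nn d ((h1 y, h2 y), 0)) (Nn d y)) as [h|h]; auto.
  exfalso. set (eta := Nn d ((h1 y, h2 y), 0) - Nn d y).
  assert (he : 0 < eta) by (unfold eta; lra).
  set (M := Rabs (h3 y) * v * v / (eta * eta)).
  destruct (archimed M) as [A1 _].
  assert (hM : 0 <= M) by (unfold M; apply Rmult_le_pos;
     [ pose proof (Rabs_pos (h3 y)); nra | left; apply Rinv_0_lt_compat; nra]).
  assert (hup : (0 < up M)%Z) by (apply lt_IZR; lra).
  set (n := Z.to_nat (up M)).
  assert (hn : INR n = IZR (up M)) by (unfold n; rewrite INR_IZR_INZ, Z2Nat.id; auto; lia).
  assert (hn0 : (0 < n)%nat) by (apply INR_lt; rewrite hn; simpl; lra).
  specialize (key n hn0). fold eta in key.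
  set (s := sqrt (Rabs (h3 y) / INR n)) in key.
  assert (hs2 : s * s = Rabs (h3 y) / INR n).
  { unfold s; apply sqrt_sqrt. apply Rmult_le_pos. apply Rabs_pos. left; apply Rinv_0_lt_compat; lra. }
  assert (hs0 : 0 <= s) by apply sqrt_pos.
  assert (Hlt : Rabs (h3 y) * v * v < eta * eta * INR n).
  { rewrite hn. apply Rmult_lt_reg_r with (/ (eta*eta)).
    apply Rinv_0_lt_compat; nra.
    replace (eta * eta * IZR (up M) * / (eta * eta)) with (IZR (up M)) by (field; lra).
    unfold M in *; unfold Rdiv in *; lra. }
  assert (s * v * (s * v) < eta * eta).
  { replace (s * v * (s*v)) with (s * s * v * v) by ring. rewrite hs2.
    apply Rmult_lt_reg_r with (INR n). lra.
    replace (Rabs (h3 y) / INR n * v * v * INR n) with (Rabs (h3 y) * v * v) by (field; lra). lra. }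
  unfold eta in *. nra.
Qed.

Definition om (a b : H) := h1 a * h2 b - h2 a * h1 b.

Lemma N_comm d (Hd : is_hom_distance d) a b :
  sqrt (Rabs (2 * om a b)) * Nn d e3 <= 2 * Nn d a + 2 * Nn d b.
Proof.
  rewrite <- N_vert; auto.
  replace ((0,0), 2 * om a b) with (hmul (hmul (hmul a b) (hinv a)) (hinv b))
    by (unfold om; hx; ring).
  pose proof (N_mul d Hd (hmul (hmul a b) (hinv a)) (hinv b)).
  pose proof (N_mul d Hd (hmul a b) (hinv a)).
  pose proof (N_mul d Hd a b).
  rewrite !N_inv in *; auto. lra.
Qed.

Lemma y3_bound d (Hd : is_hom_distance d) y :
  Rabs (h3 y) * (Nn d e3 * Nn d e3) <= 4 * (Nn d y * Nn d y).
Proof.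
  assert (A : sqrt (Rabs (h3 y)) * Nn d e3 <= 2 * Nn d y).
  { rewrite <- N_vert; auto.
    replace ((0,0), h3 y) with (hmul (hinv ((h1 y, h2 y), 0)) y) by (hx; ring).
    pose proof (N_mul d Hd (hinv ((h1 y, h2 y), 0)) y) as M. rewrite N_inv in M; auto.
    pose proof (N_proj d Hd y). lra. }
  pose proof (sqrt_sqrt (Rabs (h3 y)) (Rabs_pos _)) as Q.
  pose proof (sqrt_pos (Rabs (h3 y))). pose proof (v_pos d Hd).
  pose proof (N_ge0 d Hd y).
  set (s := sqrt (Rabs (h3 y))) in *. rewrite <- Q.
  assert (0 <= s * Nn d e3) by nra. nra.
Qed.

Lemma om_bound d (Hd : is_hom_distance d) g y l : 0 < l ->
  Rabs (om g y) * (2 * (Nn d e3 * Nn d e3)) <=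
   (2 * l * Nn d g + 2 * / l * Nn d y) * (2 * l * Nn d g + 2 * / l * Nn d y).
Proof.
  intro hl.
  pose proof (N_comm d Hd (dil l g) (dil (/l) y)) as A.
  rewrite !N_dil in A; auto; [|apply Rinv_0_lt_compat; auto].
  replace (om (dil l g) (dil (/ l) y)) with (om g y) in A
    by (unfold om, dil, h1, h2; simpl; field; lra).
  pose proof (sqrt_sqrt (Rabs (2 * om g y)) (Rabs_pos _)) as Q.
  pose proof (sqrt_pos (Rabs (2 * om g y))). pose proof (v_pos d Hd).
  set (s := sqrt (Rabs (2 * om g y))) in *.
  rewrite Rabs_mult, (Rabs_right 2) in Q by lra.
  assert (0 <= s * Nn d e3) by nra.
  replace (Rabs (om g y) * (2 * (Nn d e3 * Nn d e3))) with ((s * Nn d e3) * (s * Nn d e3))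
    by (replace ((s * Nn d e3) * (s * Nn d e3)) with ((s*s) * (Nn d e3 * Nn d e3)) by ring;
        rewrite Q; ring).
  nra.
Qed.

Lemma f_ident p gt x :
  h3 (hmul (hinv gt) x) =
  h3 (hmul (hinv p) x) - h3 (hmul (hinv p) gt) - om (hmul (hinv p) gt) (hmul (hinv p) x).
Proof. unfold om, hmul, hinv, h1, h2, h3; simpl; ring. Qed.

Lemma cont_F (I : R -> Prop) gamma x r (Hcont : continuous_on I gamma)
  (HIr : forall t, Rabs t < r -> I t) a : Rabs a < r ->
  continuity_pt (fun t => - h3 (hmul (hinv (gamma t)) x)) a.
Proof.
  intro ha. unfold continuity_pt, continue_in, limit1_in, limit_in. simpl. unfold R_dist.
  intros eps heps.
  set (c := 1 + Rabs (h1 x) + Rabs (h2 x)).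
  assert (hc : 0 < c) by (unfold c; pose proof (Rabs_pos (h1 x)); pose proof (Rabs_pos (h2 x)); lra).
  destruct (Hcont a (HIr a ha) (eps / c)) as [del [hdel Hd]].
  { apply Rdiv_lt_0_compat; auto. }
  exists (Rmin del (r - Rabs a)). split.
  { apply Rmin_glb_lt; lra. }
  intros s [_ hs].
  assert (hs1 : Rabs (s - a) < del) by (eapply Rlt_le_trans; [exact hs| apply Rmin_l]).
  assert (hs2 : Rabs (s - a) < r - Rabs a) by (eapply Rlt_le_trans; [exact hs| apply Rmin_r]).
  assert (Is : I s).
  { apply HIr. pose proof (Rabs_triang (s - a) a). replace (s - a + a) with s in H by ring. lra. }
  destruct (Hd s Is hs1) as [A1 [A2 A3]].
  unfold hmul, hinv, h1, h2, h3 in *; simpl in *.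
  set (u1 := fst (fst (gamma s)) - fst (fst (gamma a))) in *.
  set (u2 := snd (fst (gamma s)) - snd (fst (gamma a))) in *.
  set (u3 := snd (gamma s) - snd (gamma a)) in *.
  replace (- (- snd (gamma s) + snd x + - fst (fst (gamma s)) * snd (fst x) -
      - snd (fst (gamma s)) * fst (fst x)) -
   - (- snd (gamma a) + snd x + - fst (fst (gamma a)) * snd (fst x) -
      - snd (fst (gamma a)) * fst (fst x))) with
    (u3 + u1 * snd (fst x) - u2 * fst (fst x)) by (unfold u1, u2, u3; ring).
  eapply Rle_lt_trans. apply Rabs_triang.
  eapply Rle_lt_trans. apply Rplus_le_compat_r. apply Rabs_triang.
  rewrite Rabs_Ropp, !Rabs_mult.
  assert (Rabs u1 * Rabs (snd (fst x)) <= eps / c * Rabs (snd (fst x)))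
    by (apply Rmult_le_compat_r; [apply Rabs_pos| lra]).
  assert (Rabs u2 * Rabs (fst (fst x)) <= eps / c * Rabs (fst (fst x)))
    by (apply Rmult_le_compat_r; [apply Rabs_pos| lra]).
  assert (eps = eps / c * c) by (field; lra).
  unfold c in *. lra.
Qed.

Theorem mainTheorem4
  (d : H -> H -> R) (Hd : is_hom_distance d)
  (alpha : R) (Halpha : 0 < alpha <= 1)
  (I : R -> Prop) (HI : is_interval I)
  (HI0 : exists r, 0 < r /\ forall t, Rabs t < r -> I t)
  (gamma : R -> H) (Hcont : continuous_on I gamma)
  (rho : R) (Hrho : 0 < rho)
  (Hgam : forall t, I t ->
     hnorm (hmul (hinv (gamma 0)) (gamma t)) <= rho * rpow (Rabs t) ((1 + alpha) / 2) /\
     Rabs (h3 (hmul (hinv (gamma 0)) (gamma t)) - t) <= rho ^ 2 * rpow (Rabs t) (1 + alpha)) :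
  exists delta2, 0 < delta2 /\ (forall t, - delta2 <= t <= delta2 -> I t) /\
    forall delta, 0 < delta <= delta2 ->
      exists eps2, 0 < eps2 /\
        forall x, d (gamma 0) x < eps2 ->
          exists t, - delta <= t <= delta /\
            vnorm (hmul (hinv (gamma t)) x) <= hnorm (hmul (hinv (gamma t)) x).
Proof.
  destruct HI0 as [r [hr HIr]].
  set (c := Rpower (/ (2 * rho ^ 2)) (/ alpha)).
  assert (hc : 0 < c) by (unfold c, Rpower; apply exp_pos).
  exists (Rmin (r / 2) c). split; [apply Rmin_glb_lt; lra|]. split.
  { intros t ht. apply HIr. pose proof (Rmin_l (r/2) c). apply Rabs_def1; lra. }
  intros delta [hd0 hd2].
  assert (hdr : delta < r) by (pose proof (Rmin_l (r/2) c); lra).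
  assert (hP : rho ^ 2 * Rpower delta alpha <= / 2).
  { assert (Rpower delta alpha <= / (2 * rho ^ 2)).
    { replace (/ (2 * rho ^ 2)) with (Rpower c alpha).
      apply Rle_Rpower_l; [lra| split; auto; pose proof (Rmin_r (r/2) c); lra].
      unfold c. rewrite Rpower_mult. replace (/ alpha * alpha) with 1 by (field; lra).
      apply Rpower_1. apply Rinv_0_lt_compat. nra. }
    assert (0 < rho ^ 2) by nra.
    apply Rmult_le_compat_l with (r := rho ^ 2) in H; [|lra].
    replace (rho ^ 2 * / (2 * rho ^ 2)) with (/2) in H by (field; lra). lra. }
  assert (hrp : forall t, Rabs t = delta -> rho ^ 2 * rpow (Rabs t) (1 + alpha) <= delta / 2).
  { intros t ht. rewrite ht. unfold rpow. destruct (Rle_dec delta 0); [lra|].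
    rewrite Rpower_plus, Rpower_1 by lra.
    pose proof (exp_pos (alpha * ln delta)). unfold Rpower in *. nra. }
  set (p := gamma 0).
  set (gd := hmul (hinv p) (gamma delta)).
  set (gm := hmul (hinv p) (gamma (- delta))).
  assert (Id : I delta) by (apply HIr; rewrite Rabs_right; lra).
  assert (Im : I (- delta)) by (apply HIr; rewrite Rabs_left; lra).
  assert (hgd : delta / 2 <= h3 gd).
  { destruct (Hgam delta Id) as [_ B]. specialize (hrp delta (Rabs_right _ (Rle_ge _ _ (Rlt_le _ _ hd0)))).
    fold p gd in B. pose proof (Rle_abs (delta - h3 gd)). rewrite Rabs_minus_sym in H. lra. }
  assert (hgm : h3 gm <= - (delta / 2)).
  { destruct (Hgam (- delta) Im) as [_ B].
    assert (Rabs (- delta) = delta) by (rewrite Rabs_left; lra).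
    specialize (hrp (- delta) H).
    fold p gm in B. pose proof (Rle_abs (h3 gm - - delta)). lra. }
  set (v := Nn d e3). assert (hv : 0 < v) by apply v_pos, Hd.
  set (K := Nn d gd + Nn d gm).
  assert (hK1 : Nn d gd <= K) by (unfold K; pose proof (N_ge0 d Hd gm); lra).
  assert (hK2 : Nn d gm <= K) by (unfold K; pose proof (N_ge0 d Hd gd); lra).
  assert (hK0 : 0 <= K) by (pose proof (N_ge0 d Hd gd); lra).
  set (C := 4 + 2 * ((K + 1) * (K + 1))).
  assert (hC : 0 < C) by (unfold C; nra).
  exists (Rmin 1 (delta / 4 * (v * v) / C)).
  assert (he : 0 < delta / 4 * (v * v) / C) by (apply Rdiv_lt_0_compat; [apply Rmult_lt_0_compat; [lra| apply Rmult_lt_0_compat; lra] | lra]).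
  split; [apply Rmin_glb_lt; lra|].
  intros x hx.
  set (eps2 := Rmin 1 (delta / 4 * (v * v) / C)) in *.
  assert (he1 : eps2 <= 1) by apply Rmin_l.
  assert (he2 : eps2 <= delta / 4 * (v * v) / C) by apply Rmin_r.
  assert (he0 : 0 < eps2) by (apply Rmin_glb_lt; lra).
  set (y := hmul (hinv p) x).
  assert (hNy : Nn d y = d p x).
  { destruct Hd as [_ [_ [_ [_ [E _]]]]]. unfold Nn, y. rewrite <- (E (hinv p) p x).
    f_equal. apply H_ext; unfold hmul, hinv, e0, h1, h2, h3; simpl; ring. }
  assert (hNy0 : 0 <= Nn d y) by apply N_ge0, Hd.
  assert (B3 : Rabs (h3 y) * (v * v) <= 4 * eps2).
  { pose proof (y3_bound d Hd y). fold v in H. nra. }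
  set (l := sqrt eps2).
  assert (hl : 0 < l) by (apply sqrt_lt_R0; auto).
  assert (hll : l * l = eps2) by (apply sqrt_sqrt; lra).
  assert (Bom : forall g, Nn d g <= K -> Rabs (om g y) * (v * v) <= 2 * eps2 * ((K+1)*(K+1))).
  { intros g hg. pose proof (om_bound d Hd g y l hl) as A. fold v in A.
    assert (hy' : / l * Nn d y <= l).
    { apply Rmult_le_reg_l with l; auto. rewrite <- Rmult_assoc, Rinv_r, hll by lra. lra. }
    assert (hg0 : 0 <= Nn d g) by apply N_ge0, Hd.
    assert (hil : 0 <= / l * Nn d y) by (apply Rmult_le_pos; auto; left; apply Rinv_0_lt_compat; auto).
    assert (2 * l * Nn d g + 2 * / l * Nn d y <= 2 * l * (K + 1)) by nra.
    assert (0 <= 2 * l * Nn d g + 2 * / l * Nn d y) by nra.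
    assert ((2 * l * Nn d g + 2 * / l * Nn d y) * (2 * l * Nn d g + 2 * / l * Nn d y)
       <= (2 * l * (K + 1)) * (2 * l * (K + 1))) by nra.
    replace ((2 * l * (K + 1)) * (2 * l * (K + 1))) with (4 * (l * l) * ((K+1)*(K+1))) in H1 by ring.
    rewrite hll in H1. nra. }
  assert (Sum : forall g, Nn d g <= K -> Rabs (h3 y) + Rabs (om g y) <= delta / 4).
  { intros g hg. specialize (Bom g hg).
    assert ((Rabs (h3 y) + Rabs (om g y)) * (v * v) <= eps2 * C) by (unfold C; nra).
    assert (eps2 * C <= delta / 4 * (v * v)).
    { apply Rmult_le_reg_r with (/ C). apply Rinv_0_lt_compat; auto.
      replace (eps2 * C * / C) with eps2 by (field; lra). exact he2. }
    assert (0 < v * v) by nra. nra. }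
  set (F := fun t => - h3 (hmul (hinv (gamma t)) x)).
  assert (F1 : F (- delta) < 0).
  { unfold F. rewrite (f_ident p). fold y gm.
    specialize (Sum gm hK2). pose proof (Rle_abs (- h3 y)). pose proof (Rle_abs (om gm y)).
    rewrite Rabs_Ropp in H. lra. }
  assert (F2 : 0 < F delta).
  { unfold F. rewrite (f_ident p). fold y gd.
    specialize (Sum gd hK1). pose proof (Rle_abs (h3 y)). pose proof (Rle_abs (- om gd y)).
    rewrite Rabs_Ropp in H0. lra. }
  destruct (IVT_interv F (- delta) delta) as [z [hz Fz]].
  { intros a ha. apply (cont_F I gamma x r Hcont HIr). apply Rabs_def1; lra. }
  { lra. } { exact F1. } { exact F2. }
  exists z. split; auto.
  unfold F in Fz. unfold vnorm.
  replace (h3 (hmul (hinv (gamma z)) x)) with 0 by lra.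
  rewrite Rabs_R0, sqrt_0. unfold hnorm. apply sqrt_pos.
Qed.
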